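(* Let $p$ be a prime and $m\ge 0$ an integer. Let $C_m=\{a\in\mathbb{Z}_p:\delta^m a=0\}$; the reduction map $C_m\to\mathbb{Z}_p/p^m\mathbb{Z}_p$ is a bijection, so for each $\alpha\in I=\{0,1,\dots,p^m-1\}$ there is a unique $a_\alpha\in C_m$ with $a_\alpha\equiv\alpha \pmod{p^m}$. Let $I'=\{\beta=(\beta_0,\dots,\beta_{m-1})\in\mathbb{Z}^m:0\le\beta_0,\dots,\beta_{m-1}\le p-1\}$ (a set with $p^m$ elements), fix any ordering of $I'$, and let $W=(w_{\alpha\beta})_{\alpha\in I,\beta\in I'}$ be the square matrix with entries $w_{\alpha\beta}=(a_\alpha)^{\beta_0}(\delta a_\alpha)^{\beta_1}\cdots(\delta^{m-1}a_\alpha)^{\beta_{m-1}}\in\mathbb{Z}_p$, with the convention $b^0=1$ for all $b\in\mathbb{Z}_p$. Then $\det W$ is a unit in $\mathbb{Z}_p$.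
   Context: $\mathbb{Z}_p$ is the ring of $p$-adic integers, $\delta:\mathbb{Z}_p\to\mathbb{Z}_p$ is the Fermat quotient operator $\delta a=(a-a^p)/p$, and $\delta^i$ is its $i$-th iterate. (Changing the ordering of $I'$ only changes $\det W$ by a sign.) *)

(* Defs.v *)
From HB Require Import structures.
From mathcomp Require Import all_boot all_order all_algebra.
From mathcomp Require Import boolp.
Set Implicit Arguments.
Unset Strict Implicit.
Unset Printing Implicit Defensive.
Import Order.TTheory GRing.Theory Num.Theory.
Local Open Scope ring_scope.

(* The ring Z_p of p-adic integers, built as the inverse limit                 *)
(*   Z_p = lim_n Z / p^(n+1) Z                                                *)
(* To keep every 'Z_(_) a genuine ring for every nat parameter p, the modulus  *)
(* at level n is (maxn p 2)^(n+1); for every prime p this is p^(n+1).          *)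

Definition padic_base (p : nat) : nat := maxn p 2.
Definition padic_mod (p n : nat) : nat := (padic_base p ^ n.+1)%N.

Lemma padic_base_gt1 p : (1 < padic_base p)%N.
Proof. by rewrite /padic_base leq_max ltnSn orbT. Qed.

Lemma padic_mod_gt1 p n : (1 < padic_mod p n)%N.
Proof.
rewrite /padic_mod; have h := padic_base_gt1 p.
by rewrite (leq_trans h) // -{1}(expn1 (padic_base p)) leq_pexp2l // ltnW.
Qed.

Lemma padic_mod_cast p n : (Zp_trunc (padic_mod p n)).+2 = padic_mod p n.
Proof. exact: Zp_cast (padic_mod_gt1 p n). Qed.

Lemma padic_mod_dvd p n : (padic_mod p n %| padic_mod p n.+1)%N.
Proof. by rewrite /padic_mod dvdn_exp2l. Qed.

Section ProductRing.
Variable p : nat.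

Definition ZpProd := forall n : nat, 'Z_(padic_mod p n).

HB.instance Definition _ := Choice.on ZpProd.

Definition zprod0 : ZpProd := fun n => 0.
Definition zprod1 : ZpProd := fun n => 1.
Definition zprodN (x : ZpProd) : ZpProd := fun n => - x n.
Definition zprodD (x y : ZpProd) : ZpProd := fun n => x n + y n.
Definition zprodM (x y : ZpProd) : ZpProd := fun n => x n * y n.

Let fe := @functional_extensionality_dep.

Lemma zprodDA : associative zprodD.
Proof. by move=> x y z; apply: fe => n; rewrite /zprodD addrA. Qed.
Lemma zprodDC : commutative zprodD.
Proof. by move=> x y; apply: fe => n; rewrite /zprodD addrC. Qed.
Lemma zprod0D : left_id zprod0 zprodD.
Proof. by move=> x; apply: fe => n; rewrite /zprodD add0r. Qed.
Lemma zprodND : left_inverse zprod0 zprodN zprodD.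
Proof. by move=> x; apply: fe => n; rewrite /zprodD /zprodN addNr. Qed.

HB.instance Definition _ :=
  GRing.isZmodule.Build ZpProd zprodDA zprodDC zprod0D zprodND.

Lemma zprodMA : associative zprodM.
Proof. by move=> x y z; apply: fe => n; rewrite /zprodM mulrA. Qed.
Lemma zprodMC : commutative zprodM.
Proof. by move=> x y; apply: fe => n; rewrite /zprodM mulrC. Qed.
Lemma zprod1M : left_id zprod1 zprodM.
Proof. by move=> x; apply: fe => n; rewrite /zprodM mul1r. Qed.
Lemma zprodMDl : left_distributive zprodM (+%R : ZpProd -> ZpProd -> ZpProd).
Proof. by move=> x y z; apply: fe => n; rewrite /zprodM mulrDl. Qed.
Lemma zprod1_neq0 : zprod1 != (0 : ZpProd).
Proof.
apply/eqP=> /(congr1 (fun f : ZpProd => f 0%N)) /eqP.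
by rewrite /zprod1 oner_eq0.
Qed.

HB.instance Definition _ :=
  GRing.Zmodule_isComNzRing.Build ZpProd zprodMA zprodMC zprod1M zprodMDl
    zprod1_neq0.

Definition padic_red n (y : 'Z_(padic_mod p n.+1)) : 'Z_(padic_mod p n) :=
  (val y)%:R.

Lemma padic_red_mod n c :
  (((c %% (Zp_trunc (padic_mod p n.+1)).+2)%N)%:R : 'Z_(padic_mod p n)) = c%:R.
Proof.
rewrite [X in (_ %% X)%N]padic_mod_cast.
rewrite -[in RHS](Zp_nat_mod (padic_mod_gt1 p n)) -(Zp_nat_mod (padic_mod_gt1 p n)).
by rewrite modn_dvdm // padic_mod_dvd.
Qed.

Lemma padic_val n (y : 'Z_(padic_mod p n)) : y = (val y)%:R.
Proof. by rewrite natr_Zp. Qed.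

Lemma padic_redD n : {morph @padic_red n : x y / x + y}.
Proof.
move=> x y; rewrite /padic_red /= padic_red_mod.
by rewrite natrD.
Qed.

Lemma padic_redM n : {morph @padic_red n : x y / x * y}.
Proof.
move=> x y; rewrite /padic_red /= padic_red_mod.
by rewrite natrM.
Qed.

Lemma padic_redN n : {morph @padic_red n : x / - x}.
Proof.
move=> x; apply/eqP; rewrite -subr_eq0 opprK -padic_redD addNr.
by rewrite /padic_red /=.
Qed.

Definition padic_compat : {pred ZpProd} :=
  [pred x : ZpProd | `[< forall n, x n = padic_red (x n.+1) >] ].

Lemma padic_compat_subring : subring_closed padic_compat.
Proof.
split.
- rewrite inE; apply/asboolP => n /=.
  by rewrite /padic_red /= padic_red_mod.
- move=> x y; rewrite !inE => /asboolP hx /asboolP hy; apply/asboolP => n.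
  by rewrite /= /zprodD /zprodN padic_redD padic_redN -hx -hy.
- move=> x y; rewrite !inE => /asboolP hx /asboolP hy; apply/asboolP => n.
  by rewrite /= /zprodM padic_redM -hx -hy.
Qed.

End ProductRing.

Record padic_int (p : nat) := PadicInt {
  padic_fam : ZpProd p;
  padic_famP : padic_fam \in @padic_compat p }.

HB.instance Definition _ p := [isSub for @padic_fam p].
HB.instance Definition _ p := [Choice of padic_int p by <:].
HB.instance Definition _ p :=
  GRing.isSubringClosed.Build _ (@padic_compat p) (@padic_compat_subring p).
HB.instance Definition _ p := [SubChoice_isSubComNzRing of padic_int p by <:].

(* division by p in Z_p: fermat_quot p a is the (unique, Z_p being torsion   *)
(* free) b with p * b = a - a^p; this b exists by Fermat's little theorem.   *)
(* (The default value 0 is never used when p is prime.)                      *)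
Definition fermat_quot (p : nat) (a : padic_int p) : padic_int p :=
  match pselect (exists b : padic_int p, p%:R * b = a - a ^+ p) with
  | left h => projT1 (cid h)
  | right _ => 0
  end.

(* Main.v *)
Require Import Defs.
From HB Require Import structures.
From mathcomp Require Import all_boot all_order all_algebra.
From mathcomp Require Import boolp.
From mathcomp Require Import finfield.
From mathcomp Require Import ring.
Import Order.TTheory GRing.Theory Num.Theory.
Local Open Scope ring_scope.

Section PA.
Variable p : nat.
Hypothesis hp : prime p.

Lemma pbase : padic_base p = p.
Proof. by rewrite /padic_base; apply/maxn_idPl; exact: prime_gt1. Qed.

Lemma pmodE n : padic_mod p n = (p ^ n.+1)%N.
Proof. by rewrite /padic_mod pbase. Qed.

Lemma p_dvd_mod n : (p %| padic_mod p n)%N.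
Proof. by rewrite pmodE dvdn_exp. Qed.

Lemma fam_nat k n : padic_fam (k%:R : padic_int p) n = k%:R.
Proof.
elim: k => [//|k IH]; rewrite -[in LHS]addn1 natrD /=.
transitivity (padic_fam (k%:R : padic_int p) n + 1); first by [].
by rewrite IH -mulrSr.
Qed.

Definition rho n (x : 'Z_(padic_mod p n)) : 'F_p := (nat_of_ord x)%:R.
Arguments rho {n}.

Lemma rho_nat n k : rho (k%:R : 'Z_(padic_mod p n)) = k%:R.
Proof.
rewrite /rho val_Zp_nat ?padic_mod_gt1 //.
by rewrite -[RHS](Fp_nat_mod hp) -[LHS](Fp_nat_mod hp) (modn_dvdm _ (p_dvd_mod n)).
Qed.

Lemma rhoD n (u v : 'Z_(padic_mod p n)) : rho (u + v) = rho u + rho v.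
Proof. by rewrite {1}(padic_val u) {1}(padic_val v) -natrD rho_nat natrD. Qed.
Lemma rhoM n (u v : 'Z_(padic_mod p n)) : rho (u * v) = rho u * rho v.
Proof. by rewrite {1}(padic_val u) {1}(padic_val v) -natrM rho_nat natrM. Qed.
Lemma rhoB n (u v : 'Z_(padic_mod p n)) : rho (u - v) = rho u - rho v.
Proof. by apply/eqP; rewrite eq_sym subr_eq -rhoD subrK. Qed.
Lemma rho1 n : rho (1 : 'Z_(padic_mod p n)) = 1.
Proof. exact: (rho_nat n 1). Qed.

Definition pi (hp' : prime p) (x : padic_int p) : 'F_p := rho (padic_fam x 0).

Lemma pi_zmod : zmod_morphism (pi hp).
Proof. by move=> x y; rewrite /pi -rhoB. Qed.
Lemma pi_mon : monoid_morphism (pi hp).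
Proof. split; first exact: rho1. by move=> x y; rewrite /pi -rhoM. Qed.

End PA.
HB.instance Definition _ p (hp : prime p) := GRing.isZmodMorphism.Build _ _ (@pi p hp) (@pi_zmod p hp).
HB.instance Definition _ p (hp : prime p) := GRing.isMonoidMorphism.Build _ _ (@pi p hp) (@pi_mon p hp).
Section PB.
Variable p : nat.
Hypothesis hp : prime p.
Local Notation pi := (@pi p hp).

Lemma pi_p : pi p%:R = 0.
Proof. by rewrite rmorph_nat -(Fp_nat_mod hp) modnn. Qed.


Lemma valZ N (x : 'I_N) : val x = nat_of_ord x. Proof. by []. Qed.

Lemma Zeq n x y : (x %% padic_mod p n = y %% padic_mod p n)%N ->
  (x%:R : 'Z_(padic_mod p n)) = y%:R.
Proof. by move=> h; apply: ord_inj; rewrite !val_Zp_nat ?padic_mod_gt1. Qed.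

Lemma compat (z : padic_int p) n :
  padic_fam z n = padic_red (padic_fam z n.+1).
Proof. by have /asboolP := padic_famP z; apply. Qed.

Lemma compat_val (z : padic_int p) n :
  val (padic_fam z n) = (val (padic_fam z n.+1) %% padic_mod p n)%N.
Proof. by rewrite {1}compat /padic_red !valZ val_Zp_nat ?padic_mod_gt1. Qed.

Lemma fam_modp (z : padic_int p) n :
  (val (padic_fam z n) %% p = val (padic_fam z 0) %% p)%N.
Proof.
elim: n => [//|n IH]; rewrite -IH (compat_val z n).
by rewrite (modn_dvdm _ (@p_dvd_mod p hp n)).
Qed.

Lemma Fp_nat0 x : ((x%:R : 'F_p) == 0) = (p %| x)%N.
Proof.
rewrite /dvdn; apply/eqP/eqP => [h|h].
  by move: (congr1 val h); rewrite /= val_Fp_nat.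
by apply: val_inj; rewrite /= val_Fp_nat.
Qed.

Lemma pi0E z : (pi z == 0) = (p %| val (padic_fam z 0))%N.
Proof. exact: Fp_nat0. Qed.

Lemma pmodS n : padic_mod p n.+1 = (p * padic_mod p n)%N.
Proof. by rewrite !(@pmodE p hp) expnS. Qed.

Lemma divp (z : padic_int p) : pi z = 0 -> exists c, z = p%:R * c.
Proof.
move=> /eqP; rewrite pi0E => hz.
have dv n : (p %| val (padic_fam z n))%N.
  by rewrite /dvdn fam_modp.
pose cf : ZpProd p := fun n => ((val (padic_fam z n.+1)) %/ p)%:R.
have cP : cf \in @padic_compat p.
  rewrite inE; apply/asboolP => n; rewrite /cf /padic_red.
  have -> : val ((val (padic_fam z n.+2) %/ p)%:R : 'Z_(padic_mod p n.+1)) = ((val (padic_fam z n.+2) %/ p) %% padic_mod p n.+1)%N by exact: (@val_Zp_nat (padic_mod p n.+1) (padic_mod_gt1 _ _)).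
  apply: Zeq.
  rewrite (modn_dvdm _ (padic_mod_dvd p n)).
  have e := compat_val z n.+1; move: (dv n.+1) (dv n.+2) e.
  move=> /dvdnP[x ->] /dvdnP[y ->]; rewrite pmodS.
  have p0 : (0 < p)%N by exact: prime_gt0.
  rewrite !mulnK // -!(mulnC p) -muln_modr => /eqP; rewrite eqn_pmul2l // => /eqP ->.
  by rewrite modn_mod.
exists (PadicInt cP); apply: val_inj; apply: functional_extensionality_dep => n.
change (padic_fam z n = padic_fam (p%:R : padic_int p) n * cf n).
rewrite fam_nat /cf -natrM mulnC divnK ?dv //.
by rewrite compat /padic_red.
Qed.

Lemma red1 n : padic_red (1 : 'Z_(padic_mod p n.+1)) = 1.
Proof.
rewrite /padic_red.
have -> : val (1 : 'Z_(padic_mod p n.+1)) = 1%N.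
  have := @val_Zp_nat (padic_mod p n.+1) (padic_mod_gt1 _ _) 1.
  by rewrite modn_small ?padic_mod_gt1.
by [].
Qed.

Lemma unitp (z : padic_int p) : pi z != 0 -> exists u, z * u = 1.
Proof.
rewrite pi0E => hz.
have un n : padic_fam z n \is a GRing.unit.
  suff: ((val (padic_fam z n))%:R : 'Z_(padic_mod p n)) \is a GRing.unit by rewrite -padic_val.
  rewrite unitZpE ?padic_mod_gt1 //.
  have := fam_modp z n; move: (val (padic_fam z n)) => x hx.
  rewrite (@pmodE p hp) coprime_pexpl // prime_coprime //.
  by rewrite /dvdn hx.
pose uf : ZpProd p := fun n => (padic_fam z n)^-1.
have uP : uf \in @padic_compat p.
  rewrite inE; apply/asboolP => n; rewrite /uf.
  have h : padic_fam z n * padic_red (padic_fam z n.+1)^-1 = 1.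
    by rewrite {1}compat -padic_redM mulrV ?un // red1.
  by rewrite -[LHS]mulr1 -h mulKr ?un.
exists (PadicInt uP); apply: val_inj; apply: functional_extensionality_dep => n.
change (padic_fam z n * uf n = 1).
by rewrite /uf mulrV ?un.
Qed.

Lemma natdvd k n (c : padic_int p) : n%:R = (p ^ k)%:R * c -> (p ^ k %| n)%N.
Proof.
move=> /(congr1 (fun x => padic_fam x k)) /=.
change (padic_fam (n%:R : padic_int p) k =
        padic_fam ((p ^ k)%:R : padic_int p) k * padic_fam c k -> (p ^ k %| n)%N).
rewrite !fam_nat (padic_val (padic_fam c k)) -natrM => /(congr1 (@nat_of_ord _)).
rewrite (@val_Zp_nat (padic_mod p k) (padic_mod_gt1 _ _) n).
rewrite (@val_Zp_nat (padic_mod p k) (padic_mod_gt1 _ _)) => e.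
have d : (p ^ k %| padic_mod p k)%N by rewrite (@pmodE p hp) dvdn_exp2l.
by rewrite /dvdn -(modn_dvdm _ d) e (modn_dvdm _ d) modnMr.
Qed.

Lemma Fp_fermat (x : 'F_p) : x ^+ p = x.
Proof. by have := expf_card x; rewrite card_Fp. Qed.

Lemma fqP (x : padic_int p) : p%:R * fermat_quot x = x - x ^+ p.
Proof.
rewrite /fermat_quot; case: pselect => [h|[]].
  by case: (cid h).
have [c ->] : exists c, x - x ^+ p = p%:R * c.
  by apply: divp; rewrite rmorphB rmorphXn Fp_fermat subrr.
by exists c.
Qed.

Definition cong k (x y : padic_int p) := exists c, x - y = (p ^ k)%:R * c.

Lemma Fp_natp k : ((p ^ k.+1)%:R : 'F_p) = 0.
Proof. by apply/eqP; rewrite Fp_nat0 dvdn_exp. Qed.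

Lemma cong_pi k x y : cong k.+1 x y -> pi x = pi y.
Proof.
move=> [c e]; apply/eqP; rewrite -subr_eq0 -rmorphB e rmorphM rmorph_nat.
by rewrite Fp_natp mul0r.
Qed.

Lemma pi_cong x y : pi x = pi y -> cong 1 x y.
Proof.
move=> h; have [c e] : exists c, x - y = p%:R * c.
  by apply: divp; rewrite rmorphB /= h subrr.
by exists c; rewrite expn1.
Qed.

Lemma cong_weak i k x y : (i <= k)%N -> cong k x y -> cong i x y.
Proof.
move=> hik [c e]; exists ((p ^ (k - i))%:R * c).
by rewrite e mulrA -natrM -expnD subnKC.
Qed.

Lemma cong_pow i x y : cong i.+1 x y -> cong i.+2 (x ^+ p) (y ^+ p).
Proof.
move=> hc; have hpi := cong_pi _ _ _ hc; case: hc => c e.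
rewrite /cong subrXX e.
set S := \sum_(_ < _) _.
have [s es] : exists s, S = p%:R * s.
  apply: divp; rewrite /S rmorph_sum /=.
  rewrite (eq_bigr (fun _ => pi y ^+ p.-1)); last first.
    move=> j _; rewrite rmorphM !rmorphXn /= hpi -exprD subnK //.
    by rewrite -ltnS prednK ?prime_gt0.
  rewrite sumr_const card_ord -mulr_natr.
  by have := Fp_natp 0; rewrite expn1 => ->; rewrite mulr0.
exists (c * s); rewrite es (expnS p i.+1) natrM.
ring.
Qed.

Local Notation dq := (@fermat_quot p).

Lemma main_cong k : forall a b,
  (forall j, (j < k)%N -> pi (iter j dq a) = pi (iter j dq b)) -> cong k a b.
Proof.
elim: k => [|k IH] a b h.
  by exists (a - b); rewrite expn0 mul1r.
have hd : cong k (dq a) (dq b).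
  by apply: IH => j hj; rewrite -!iterSr; apply: h.
have h1 : cong 1 a b by apply: pi_cong; exact: (h 0%N).
suff: forall i, (i <= k)%N -> cong i.+1 a b by apply.
elim=> [_|i IHi hi]; first exact: h1.
have [f ef] := cong_pow _ _ _ (IHi (ltnW hi)).
have [d ed] := cong_weak _ _ _ _ hi hd.
exists (f + d); rewrite mulrDr -ef (expnS p i.+1) natrM -mulrA -ed mulrBr !fqP.
ring.
Qed.

Lemma small_eq (M x y : nat) (c : padic_int p) : (x < p ^ M)%N -> (y <= x)%N ->
  (x - y)%:R = (p ^ M)%:R * c -> x = y.
Proof.
move=> hx hyx /natdvd hd.
have : (x - y < p ^ M)%N by apply: leq_ltn_trans (leq_subr _ _) hx.
case: (posnP (x - y)) => [h0 _|h0 hlt]; first by apply/eqP; rewrite eqn_leq hyx -subn_eq0 h0.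
by have := dvdn_leq h0 hd; rewrite leqNgt hlt.
Qed.

Lemma inj_final m (a : 'I_(p ^ m) -> padic_int p)
  (haR : forall alpha : 'I_(p ^ m),
      exists c : padic_int p, a alpha - (alpha : nat)%:R = (p ^ m)%:R * c)
  al ga : (forall j, (j < m)%N -> pi (iter j dq (a al)) = pi (iter j dq (a ga))) ->
  al = ga.
Proof.
move=> /main_cong [c e].
have [c1 e1] := haR al; have [c2 e2] := haR ga.
have E : (al : nat)%:R - (ga : nat)%:R = (p ^ m)%:R * (c - c1 + c2) :> padic_int p.
  rewrite mulrDr mulrBr -e -e1 -e2.
  move: (a al) (a ga) ((al : nat)%:R : padic_int p) ((ga : nat)%:R : padic_int p) => A B X Y.
  ring.
apply: ord_inj; case: (leqP ga al) => h.
  apply: (small_eq _ _ _ (c - c1 + c2) (ltn_ord al) h).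
  by rewrite (natrB _ h).
symmetry; apply: (small_eq _ _ _ (-(c - c1 + c2)) (ltn_ord ga) (ltnW h)).
by rewrite (natrB _ (ltnW h)) mulrN -E opprB.
Qed.

Lemma sumS (R : nmodType) n (h : (0 < n)%N) (F : nat -> R) :
  \sum_(i < n.-1.+1) F i = \sum_(i < n) F i.
Proof. by case: n h. Qed.

Definition gco (u : 'F_p) (k : nat) : 'F_p :=
  (k == 0)%:R - 'C(p.-1, k)%:R * (-u) ^+ (p.-1 - k).

Lemma ind_sum (u x : 'F_p) : \sum_(k < p) x ^+ k * gco u k = (x == u)%:R.
Proof.
have p0 : (0 < p)%N := prime_gt0 hp.
transitivity (1 - (x - u) ^+ p.-1).
  rewrite /gco; under eq_bigr do rewrite mulrBr.
  rewrite sumrB; congr (_ - _).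
    rewrite (bigD1 (Ordinal p0)) //= expr0 mulr1 big1 ?addr0 // => k hk.
    suff -> : (nat_of_ord k == 0%N) = false by rewrite mulr0.
    apply/negbTE; move: hk; apply: contraNneq => e; apply/eqP; exact: ord_inj.
  rewrite addrC exprDn.
  rewrite -(@sumS _ _ p0 (fun i => x ^+ i * ('C(p.-1, i)%:R * (- u) ^+ (p.-1 - i)))).
  apply: eq_bigr => i _; rewrite -mulr_natr.
  move: ('C(p.-1, i)) => c; ring.
case: eqP => [->|/eqP ne].
  have hn : (p.-1 != 0)%N by rewrite -lt0n -ltnS prednK // prime_gt1.
  by rewrite subrr expr0n (negbTE hn) subr0.
have ne' : x - u != 0 by rewrite subr_eq0.
have h : (x - u) * (x - u) ^+ p.-1 = (x - u) * 1.
  by rewrite mulr1 -exprS prednK // Fp_fermat.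
by rewrite (mulfI ne' h) subrr.
Qed.

Lemma mat_inv m (v : 'I_(p ^ m) -> 'I_m -> 'F_p)
  (vinj : forall al ga, (forall j, v al j = v ga j) -> al = ga)
  (ord : 'I_(p ^ m) -> {ffun 'I_m -> 'I_p}) (hord : bijective ord) :
  exists C, (\matrix_(al < p ^ m, be < p ^ m) \prod_(j < m) v al j ^+ ord be j) *m C = 1.
Proof.
exists (\matrix_(be < p ^ m, ga < p ^ m) \prod_(j < m) gco (v ga j) (ord be j)).
apply/matrixP => al ga; rewrite !mxE.
transitivity (\sum_(be < p ^ m) \prod_(j < m) (v al j ^+ ord be j * gco (v ga j) (ord be j))).
  by apply: eq_bigr => be _; rewrite !mxE -big_split.
pose P := fun e : {ffun 'I_m -> 'I_p} =>
  \prod_(j < m) (v al j ^+ e j * gco (v ga j) (e j)).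
have E : \sum_(e : {ffun 'I_m -> 'I_p}) P e = \sum_(be < p ^ m) P (ord be).
  by apply: reindex; apply: onW_bij.
rewrite -[LHS]/(\sum_(be < p ^ m) P (ord be)) -E /P.
rewrite -(bigA_distr_bigA (fun j (k : 'I_p) => v al j ^+ k * gco (v ga j) k)) /=.
under eq_bigr do rewrite ind_sum.
case: (boolP [forall j, v al j == v ga j]) => H.
  have eag : al = ga by apply: vinj => j; apply/eqP; move/forallP: H; apply.
  by rewrite eag eqxx /= big1 // => j _; rewrite eqxx.
have [j hj] : exists j, v al j != v ga j.
  by move: H; rewrite negb_forall => /existsP.
rewrite (bigD1 j) //= (negbTE hj) mul0r.
suff -> : (al == ga) = false by [].
by apply/negbTE; apply: contraNneq hj => ->.
Qed.
End PB.

Theorem lemma4p2 (p m : nat) (hp : prime p)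
  (a : 'I_(p ^ m) -> padic_int p)
  (haC : forall alpha : 'I_(p ^ m), iter m (@fermat_quot p) (a alpha) = 0)
  (haR : forall alpha : 'I_(p ^ m),
      exists c : padic_int p, a alpha - (alpha : nat)%:R = (p ^ m)%:R * c)
  (ord : 'I_(p ^ m) -> {ffun 'I_m -> 'I_p}) (hord : bijective ord) :
  exists u : padic_int p,
    \det (\matrix_(alpha < p ^ m, beta < p ^ m)
            \prod_(j < m) (iter j (@fermat_quot p) (a alpha)) ^+ (ord beta j))
      * u = 1.
Proof.
set W := (\matrix_(alpha < p ^ m, beta < p ^ m) _).
pose v := fun al (j : 'I_m) => pi p hp (iter j (@fermat_quot p) (a al)).
have vinj : forall al ga, (forall j, v al j = v ga j) -> al = ga.
  move=> al ga h; apply: (@inj_final p hp m a haR) => j hj; exact: (h (Ordinal hj)).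
have [C hC] := @mat_inv p hp m v vinj ord hord.
have hM : map_mx (pi p hp) W = \matrix_(al < p ^ m, be < p ^ m) \prod_(j < m) v al j ^+ ord be j.
  apply/matrixP => i j; rewrite !mxE rmorph_prod; apply: eq_bigr => k _.
  by rewrite rmorphXn.
have hdet : pi p hp (\det W) != 0.
  rewrite -det_map_mx hM; apply/eqP => h0.
  have := congr1 determinant hC; rewrite det_mulmx h0 mul0r det1 => /eqP.
  by rewrite eq_sym oner_eq0.
exact: (@unitp p hp _ hdet).
Qed.
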